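(* In the Bernoulli Matching model with $k=2$ and reach $r=1$, \[ \sum_{n\ge 0}\mathbf{EL}^B_{n,2,1}\,a^n \text{ has asymptotics } \quad \mathbf{EL}^B_{n,2,1}=\frac{8}{11}n-\frac{32}{121}+O\!\left(n\,2^{-2n}\right)\quad (n\to\infty); \] in particular $\gamma^B_{2,1}=\lim_{n\to\infty}\mathbf{EL}^B_{n,2,1}/n=\frac{8}{11}$.
   Context: Let $(\epsilon_{ij})_{i,j\ge1}$ be independent random variables with $\Pr(\epsilon_{ij}=1)=\Pr(\epsilon_{ij}=0)=1/2$. For $n\ge1$ and an integer $r\ge1$, let $\mathbf{R}_{n,r}$ be the largest $m$ such that there exist indices $1\le i_1<\dots<i_m\le n$ and $1\le j_1<\dots<j_m\le n$ with $\epsilon_{i_aj_a}=1$ and $|i_a-j_a|\le r$ for all $a$. Define $\mathbf{EL}^B_{n,2,r}=\mathbb{E}\,\mathbf{R}_{n,r}$. *)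

(* Defs.v *)
From mathcomp Require Import all_boot all_order all_algebra.
Set Implicit Arguments. Unset Strict Implicit. Unset Printing Implicit Defensive.
Import Order.TTheory GRing.Theory Num.Theory.

(* Indices 1..n of the paper are represented by 'I_n (0-based, a harmless shift).
   A realisation of (eps_ij)_{i,j<=n} is a boolean matrix e (true = 1). *)
Definition config (n : nat) := {ffun 'I_n * 'I_n -> bool}.

Definition admissible n (r : nat) (e : config n) (p : 'I_n * 'I_n) : bool :=
  [&& e p, (p.1 <= p.2 + r)%N & (p.2 <= p.1 + r)%N].

Definition strictly_comparable n (p q : 'I_n * 'I_n) : bool :=
  ((p.1 < q.1)%N && (p.2 < q.2)%N) || ((q.1 < p.1)%N && (q.2 < p.2)%N).

Definition matching n r (e : config n) (S : {set 'I_n * 'I_n}) : bool :=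
  [forall p in S, admissible r e p] &&
  [forall p in S, forall q in S, (p != q) ==> strictly_comparable p q].

Definition Rnr n r (e : config n) : nat :=
  \max_(S : {set 'I_n * 'I_n} | matching r e S) #|S|.

Definition ELB (n r : nat) : rat :=
  (\sum_(e : config n) (Rnr r e)%:R) / (2 ^ (n * n))%:R.

(* Main.v *)
Require Import Defs.
From mathcomp Require Import all_boot all_order all_algebra.
From mathcomp Require Import zify ring lra.
Set Implicit Arguments. Unset Strict Implicit. Unset Printing Implicit Defensive.
Import Order.TTheory GRing.Theory Num.Theory.

Section Comb.
Variable n : nat.
Implicit Types e : config n.
Notation T := ('I_n * 'I_n)%type.

Definition inbox (i j : nat) (p : T) : bool := (p.1 < i) && (p.2 < j).

Definition goodS e i j (S : {set T}) : bool :=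
  matching 1 e S && [forall p in S, inbox i j p].

Definition L e i j : nat := \max_(S | goodS e i j S) #|S|.

Definition adm e (i j : nat) : bool :=
  [exists p : T, [&& p.1 == i :> nat, p.2 == j :> nat & admissible 1 e p]].

Lemma good0 e i j : goodS e i j set0.
Proof.
by apply/andP; split; [apply/andP; split|]; apply/forallP => p; rewrite in_set0.
Qed.

Lemma L_opt e i j : exists2 S, goodS e i j S & L e i j = #|S|.
Proof.
have h : 0 < #|[pred S | goodS e i j S]|.
  by apply/card_gt0P; exists set0; rewrite inE good0.
have [S HS E] := eq_bigmax_cond (fun S : {set T} => #|S|) h.
by exists S; [rewrite inE in HS|exact: E].
Qed.

Lemma L_ge e i j S : goodS e i j S -> #|S| <= L e i j.
Proof. by move=> h; exact: (@leq_bigmax_cond _ (goodS e i j) (fun S : {set T} => #|S|) S h). Qed.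

Lemma L_le e i j m : (forall S, goodS e i j S -> #|S| <= m) -> L e i j <= m.
Proof. by move=> h; apply/bigmax_leqP. Qed.

Lemma goodS_mono e i j i' j' S : i <= i' -> j <= j' -> goodS e i j S -> goodS e i' j' S.
Proof.
move=> hi hj /andP[hm /forallP hb]; rewrite /goodS hm /=.
apply/forallP => p; apply/implyP => pS; move/implyP: (hb p) => /(_ pS) /andP[h1 h2].
by rewrite /inbox (leq_trans h1 hi) (leq_trans h2 hj).
Qed.

Lemma L_mono e i j i' j' : i <= i' -> j <= j' -> L e i j <= L e i' j'.
Proof.
move=> hi hj; apply: L_le => S hS; apply: L_ge; exact: goodS_mono hS.
Qed.

Lemma L_rec e i j :
  L e i.+1 j.+1 = maxn (maxn (L e i j.+1) (L e i.+1 j)) (L e i j + adm e i j).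
Proof.
apply/eqP; rewrite eqn_leq; apply/andP; split.
- apply: L_le => S /andP[hm /forallP hb].
  move: (hm) => /andP[/forallP ha /forallP hc].
  have inS p : p \in S -> (p.1 < i.+1) && (p.2 < j.+1).
    by move=> pS; move/implyP: (hb p) => /(_ pS).
  case: (boolP [forall p in S, p.1 < i]) => [/forallP h1|].
    apply: leq_trans (leq_maxl _ _) ; apply: leq_trans (leq_maxl _ _).
    apply: L_ge; rewrite /goodS hm /=; apply/forallP => p; apply/implyP => pS.
    rewrite /inbox; move/implyP: (h1 p) => /(_ pS) ->; by case/andP: (inS p pS).
  move/forallPn => [q]; rewrite negb_imply => /andP[qS]; rewrite -leqNgt => hq1.
  have q1 : q.1 = i :> nat by case/andP: (inS q qS) => a _; (simpl in *; lia).
  case: (boolP [forall p in S, p.2 < j]) => [/forallP h2|].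
    apply: leq_trans (leq_maxl _ _) ; apply: leq_trans (leq_maxr _ _).
    apply: L_ge; rewrite /goodS hm /=; apply/forallP => p; apply/implyP => pS.
    rewrite /inbox; move/implyP: (h2 p) => /(_ pS) ->; by case/andP: (inS p pS) => ->.
  move/forallPn => [r]; rewrite negb_imply => /andP[rS]; rewrite -leqNgt => hr2.
  have r2 : r.2 = j :> nat by case/andP: (inS r rS) => _ b; (simpl in *; lia).
  have qr : q = r.
    apply/eqP; apply/negPn/negP => nqr.
    move/implyP: (hc q) => /(_ qS) /forallP /(_ r) /implyP /(_ rS) /implyP /(_ nqr).
    rewrite /strictly_comparable => /orP[] /andP[a b].
      by case/andP: (inS r rS) => c _; (simpl in *; lia).
    by case/andP: (inS q qS) => _ c; (simpl in *; lia).
  subst r.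
  have hadm : adm e i j.
    apply/existsP; exists q; rewrite q1 r2 !eqxx /=.
    by move/implyP: (ha q) => /(_ qS).
  rewrite hadm addn1; apply: leq_trans (leq_maxr _ _).
  rewrite (cardsD1 q S) qS add1n ltnS; apply: L_ge.
  apply/andP; split; [apply/andP; split|].
  + apply/forallP => p; apply/implyP; rewrite in_setD1 => /andP[_ pS].
    by move/implyP: (ha p) => /(_ pS).
  + apply/forallP => p; apply/implyP; rewrite in_setD1 => /andP[_ pS].
    apply/forallP => p'; apply/implyP; rewrite in_setD1 => /andP[_ p'S].
    by move/implyP: (hc p) => /(_ pS) /forallP /(_ p') /implyP /(_ p'S).
  + apply/forallP => p; apply/implyP; rewrite in_setD1 => /andP[npq pS].
    move/implyP: (hc q) => /(_ qS) /forallP /(_ p) /implyP /(_ pS).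
    rewrite eq_sym => /implyP /(_ npq).
    rewrite /strictly_comparable /inbox => /orP[] /andP[a b].
      by case/andP: (inS p pS) => c _; (simpl in *; lia).
    (simpl in *; lia).
- rewrite !geq_max; apply/andP; split; [apply/andP; split|].
  + by apply: L_mono.
  + by apply: L_mono.
  case: (boolP (adm e i j)) => [/existsP [q /and3P[q1 q2 qa]]|_]; last first.
    by rewrite addn0; apply: L_mono.
  have [S hS ->] := L_opt e i j.
  move: (hS) => /andP[/andP[/forallP ha /forallP hc] /forallP hb].
  have inS p : p \in S -> (p.1 < i) && (p.2 < j).
    by move=> pS; move/implyP: (hb p) => /(_ pS).
  have qS : q \notin S.
    by apply/negP => /inS /andP[h _]; move: h; rewrite (eqP q1) ltnn.
  have -> : #|S| + true = #|q |: S| by rewrite cardsU1 qS addnC.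
  apply: L_ge; apply/andP; split; [apply/andP; split|].
  + apply/forallP => p; apply/implyP; rewrite in_setU1 => /orP[/eqP->//|pS].
    by move/implyP: (ha p) => /(_ pS).
  + apply/forallP => p; apply/implyP; rewrite in_setU1 => hp.
    apply/forallP => p'; apply/implyP; rewrite in_setU1 => hp'.
    apply/implyP => npp.
    case/orP: hp => [/eqP ep|pS]; case/orP: hp' => [/eqP ep'|p'S].
    * by rewrite ep ep' eqxx in npp.
    * subst p; case/andP: (inS p' p'S) => a b.
      by rewrite /strictly_comparable (eqP q1) (eqP q2) a b orbT.
    * subst p'; case/andP: (inS p pS) => a b.
      by rewrite /strictly_comparable (eqP q1) (eqP q2) a b.
    * by move/implyP: (hc p) => /(_ pS) /forallP /(_ p') /implyP /(_ p'S) /implyP /(_ npp).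
  + apply/forallP => p; apply/implyP; rewrite in_setU1 => /orP[/eqP->|pS].
      by rewrite /inbox (eqP q1) (eqP q2) !ltnSn.
    by case/andP: (inS p pS) => a b; rewrite /inbox; (simpl in *; lia).
Qed.


Lemma L_box e i j i' j' :
  (forall p, admissible 1 e p -> inbox i j p = inbox i' j' p) -> L e i j = L e i' j'.
Proof.
move=> h; apply: eq_bigl => S; rewrite /goodS.
case: (boolP (matching 1 e S)) => //= /andP[/forallP ha _].
apply: eq_forallb => p; case: (boolP (p \in S)) => //= pS.
by apply: h; move/implyP: (ha p) => /(_ pS).
Qed.

Lemma L_a e i : L e i i.+2 = L e i i.+1.
Proof.
apply: L_box => p /and3P[_ h1 h2]; rewrite /inbox.
case: (boolP (p.1 < i)) => //= h; simpl in *; lia.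
Qed.

Lemma L_b e i : L e i.+2 i = L e i.+1 i.
Proof.
apply: L_box => p /and3P[_ h1 h2]; rewrite /inbox.
case: (boolP (p.2 < i)) => h; rewrite ?andbF ?andbT //; simpl in *; lia.
Qed.

Lemma L0l e j : L e 0 j = 0.
Proof.
apply/eqP; rewrite -leqn0; apply: L_le => S /andP[_ /forallP h].
rewrite leqn0 cards_eq0; apply/eqP/setP => p; rewrite in_set0.
by apply/negP => pS; move/implyP: (h p) => /(_ pS).
Qed.

Lemma L0r e i : L e i 0 = 0.
Proof.
apply/eqP; rewrite -leqn0; apply: L_le => S /andP[_ /forallP h].
rewrite leqn0 cards_eq0; apply/eqP/setP => p; rewrite in_set0.
by apply/negP => pS; move/implyP: (h p) => /(_ pS) /andP[_].
Qed.

Lemma Rnr_L e : Rnr 1 e = L e n n.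
Proof.
apply: eq_bigl => S; rewrite /goodS.
have -> : [forall p in S, inbox n n p] by apply/forallP => p; rewrite /inbox !ltn_ord implybT.
by rewrite andbT.
Qed.

Lemma L_ext e e' i j : (forall p, inbox i j p -> e p = e' p) -> L e i j = L e' i j.
Proof.
move=> h; apply: eq_bigl => S; rewrite /goodS /matching.
case: (boolP [forall p in S, inbox i j p]) => [/forallP hb|]; last by rewrite !andbF.
rewrite !andbT; congr andb; apply: eq_forallb => p.
case: (boolP (p \in S)) => //= pS.
by rewrite /admissible h //; move/implyP: (hb p) => /(_ pS).
Qed.

Lemma adm_ord e (x y : 'I_n) : adm e x y = admissible 1 e (x, y).
Proof.
apply/existsP/idP => [[p /and3P[/eqP h1 /eqP h2 hp]]|hp].
  have E : p = (x, y) by case: p h1 h2 hp => a b /= h1 h2 _; congr pair; apply: val_inj.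
  by rewrite -E.
by exists (x, y); rewrite !eqxx.
Qed.

End Comb.

Section Chain.
Variable n : nat.
Implicit Types e : config n.

Definition cc e i := L e i i.
Definition aa e i := L e i i.+1.
Definition bb e i := L e i.+1 i.
Definition sa e i : bool := aa e i == (cc e i).+1.
Definition sb e i : bool := bb e i == (cc e i).+1.

Lemma rec_c e i : cc e i.+1 = maxn (maxn (aa e i) (bb e i)) (cc e i + adm e i i).
Proof. by rewrite /cc L_rec. Qed.
Lemma rec_a e i : aa e i.+1 = maxn (cc e i.+1) (aa e i + adm e i i.+1) .
Proof.
rewrite /aa L_rec L_a -/(aa e i) -/(cc e i.+1) -/(aa e i).
have h1 : aa e i <= cc e i.+1 by rewrite rec_c; lia.
lia.
Qed.
Lemma rec_b e i : bb e i.+1 = maxn (cc e i.+1) (bb e i + adm e i.+1 i) .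
Proof.
rewrite /bb L_rec L_b -/(bb e i) -/(cc e i.+1).
have h1 : bb e i <= cc e i.+1 by rewrite rec_c; lia.
lia.
Qed.

Lemma inv e i : [&& cc e i <= aa e i, aa e i <= (cc e i).+1, cc e i <= bb e i & bb e i <= (cc e i).+1].
Proof.
elim: i => [|i IH]; first by rewrite /cc /aa /bb !L0l L0r.
move/and4P: IH => [h1 h2 h3 h4].
have c1 := rec_c e i; have a1 := rec_a e i; have b1 := rec_b e i.
case: (adm e i i) c1; case: (adm e i i.+1) a1; case: (adm e i.+1 i) b1 => /= b1 a1 c1;
  apply/and4P; split; lia.
Qed.

Lemma step_c e i : cc e i.+1 = (cc e i + (if sa e i || sb e i then 1 else adm e i i))%N.
Proof.
move/and4P: (inv e i) => [h1 h2 h3 h4]; rewrite rec_c /sa /sb.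
case: (adm e i i); case: (@eqP _ (aa e i) (cc e i).+1) => ?; case: (@eqP _ (bb e i) (cc e i).+1) => ? /=; lia.
Qed.

Lemma step_sa e i : sa e i.+1 = adm e i i.+1 && (if sa e i || sb e i then sa e i else ~~ adm e i i).
Proof.
move/and4P: (inv e i) => [h1 h2 h3 h4].
rewrite {1}/sa rec_a step_c /sa /sb.
case: (adm e i i); case: (adm e i i.+1); case: (@eqP _ (aa e i) (cc e i).+1) => ?; case: (@eqP _ (bb e i) (cc e i).+1) => ? /=;
  first [by apply/eqP; lia | by apply/negbTE/eqP; lia].
Qed.

Lemma step_sb e i : sb e i.+1 = adm e i.+1 i && (if sa e i || sb e i then sb e i else ~~ adm e i i).
Proof.
move/and4P: (inv e i) => [h1 h2 h3 h4].
rewrite {1}/sb rec_b step_c /sa /sb.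
case: (adm e i i); case: (adm e i.+1 i); case: (@eqP _ (aa e i) (cc e i).+1) => ?; case: (@eqP _ (bb e i) (cc e i).+1) => ? /=;
  first [by apply/eqP; lia | by apply/negbTE/eqP; lia].
Qed.

Lemma cc_ext e e' i : (forall p, inbox i i.+1 p || inbox i.+1 i p -> e p = e' p) ->
  [/\ cc e i = cc e' i, sa e i = sa e' i & sb e i = sb e' i].
Proof.
move=> h.
have hc : cc e i = cc e' i.
  apply: L_ext => p hp; apply: h; move: hp; rewrite /inbox => /andP[x y].
  by rewrite /inbox x ltnS (ltnW y).
have ha : aa e i = aa e' i by apply: L_ext => p hp; rewrite h // hp.
have hb : bb e i = bb e' i by apply: L_ext => p hp; rewrite h // hp orbT.
by rewrite /sa /sb hc ha hb.
Qed.

End Chain.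

Local Open Scope ring_scope.
Definition upd (X : finType) (e : {ffun X -> bool}) (x : X) (b : bool) : {ffun X -> bool} :=
  [ffun y => if y == x then b else e y].

Lemma upd_same (X : finType) (e : {ffun X -> bool}) x b : upd e x b x = b.
Proof. by rewrite /upd ffunE eqxx. Qed.

Lemma upd_other (X : finType) (e : {ffun X -> bool}) x b y : y != x -> upd e x b y = e y.
Proof. by move=> h; rewrite /upd ffunE (negbTE h). Qed.

Lemma avg1 (X : finType) (F : {ffun X -> bool} -> rat) (x : X) :
  \sum_e F e = \sum_e (F (upd e x true) + F (upd e x false)) / 2.
Proof.
pose tog (e : {ffun X -> bool}) := upd e x (~~ e x).
have togK : involutive tog.
  move=> e; apply/ffunP => y; rewrite /tog /upd !ffunE.
  by case: (y =P x) => [->|]; rewrite ?eqxx ?negbK.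
have E : \sum_e F e = \sum_e F (tog e) by rewrite (reindex_inj (inv_inj togK)).
have H e : F e + F (tog e) = F (upd e x true) + F (upd e x false).
  have Ee : e = upd e x (e x).
    by apply/ffunP => y; rewrite /upd ffunE; case: (y =P x) => [->|].
  rewrite /tog; case Hx: (e x); rewrite {1}Ee Hx //= addrC //.
rewrite -big_distrl /= -(eq_bigr _ (fun e _ => H e)) big_split /= -E.
by field.
Qed.

Lemma avg3 (X : finType) (st : {ffun X -> bool} -> bool * bool) (x1 x2 x3 : X)
  (G : bool * bool -> bool -> bool -> bool -> rat) :
  x2 != x1 -> x3 != x1 -> x3 != x2 ->
  (forall e b, st (upd e x1 b) = st e) ->
  (forall e b, st (upd e x2 b) = st e) ->
  (forall e b, st (upd e x3 b) = st e) ->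
  \sum_e G (st e) (e x1) (e x2) (e x3) =
  \sum_e (\sum_b1 \sum_b2 \sum_b3 G (st e) b1 b2 b3) / 8.
Proof.
move=> d21 d31 d32 h1 h2 h3.
rewrite (avg1 _ x1).
under eq_bigr do rewrite !h1 !upd_same !(upd_other _ _ d21) !(upd_other _ _ d31).
rewrite (avg1 _ x2).
under eq_bigr do rewrite !h2 !upd_same !(upd_other _ _ d32).
rewrite (avg1 _ x3).
under eq_bigr do rewrite !h3 !upd_same.
apply: eq_bigr => e _; rewrite !big_bool /=; lra.
Qed.

Lemma sum_st (X : finType) (st : X -> bool * bool) (H : bool * bool -> rat) :
  \sum_e H (st e) = \sum_s (\sum_e (st e == s)%:R) * H s.
Proof.
under [RHS]eq_bigr do rewrite big_distrl /=.
rewrite exchange_big /=; apply: eq_bigr => e _.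
rewrite (bigD1 (st e)) //= eqxx mul1r big1 ?addr0 // => s /negbTE.
by rewrite eq_sym => ->; rewrite mul0r.
Qed.

Section Prob.
Variable n : nat.
Notation T := ('I_n * 'I_n)%type.
Implicit Types e : config n.

Definition st e i := (sa e i, sb e i).
Definition Ps i s : rat := \sum_(e : config n) (st e i == s)%:R.
Definition Cs i : rat := \sum_(e : config n) (cc e i)%:R.
Definition Z : rat := \sum_(e : config n) 1.

Lemma inv_upd e i (p : T) b : ~~ (inbox i i.+1 p || inbox i.+1 i p) ->
  st (upd e p b) i = st e i /\ cc (upd e p b) i = cc e i.
Proof.
move=> hp.
have H : forall q, inbox i i.+1 q || inbox i.+1 i q -> upd e p b q = e q.
  move=> q hq; rewrite upd_other //; apply/negP => /eqP E; subst q.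
  by rewrite hq in hp.
have [h1 h2 h3] := cc_ext H.
by rewrite /st h1 h2 h3.
Qed.

Lemma Cs_step i (hi : (i < n)%N) : Cs i.+1 = Cs i + Z - Ps i (false, false) / 2.
Proof.
pose x := Ordinal hi.
have hx : ~~ (inbox i i.+1 (x, x) || inbox i.+1 i (x, x)) by rewrite /inbox /= ltnn /= andbF.
have ax e : adm e i i = e (x, x).
  by rewrite -[i]/(nat_of_ord x) adm_ord /admissible /= addn1 leqnSn !andbT.
rewrite /Cs.
under eq_bigr do rewrite step_c natrD ax.
rewrite big_split /= -addrA; congr (_ + _).
have E e b : (if sa (upd e (x, x) b) i || sb (upd e (x, x) b) i then 1%N
      else upd e (x, x) b (x, x))%:R = (if sa e i || sb e i then 1 else b%:R) :> rat.
  have [h _] := inv_upd e b hx; case: h => -> ->.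
  by rewrite upd_same; case: ifP.
rewrite (avg1 _ (x, x)).
under eq_bigr do rewrite !E.
rewrite /Z /Ps mulr_suml -sumrB; apply: eq_bigr => e _.
rewrite /st; case: (sa e i); case: (sb e i) => /=; lra.
Qed.


Definition Tf (s : bool * bool) (b1 b2 b3 : bool) : bool * bool :=
  (b2 && (if s.1 || s.2 then s.1 else ~~ b1), b3 && (if s.1 || s.2 then s.2 else ~~ b1)).

Definition K (s t : bool * bool) : rat :=
  (\sum_b1 \sum_b2 \sum_b3 (Tf s b1 b2 b3 == t)%:R) / 8.

Lemma Ps_step i (hi1 : (i.+1 < n)%N) t : Ps i.+1 t = \sum_s Ps i s * K s t.
Proof.
have hi : (i < n)%N by apply: ltnW.
pose x := Ordinal hi; pose y := Ordinal hi1.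
have xy : y != x by rewrite -val_eqE /= (gtn_eqF (ltnSn i)).
have d21 : (x, y) != (x, x) by rewrite xpair_eqE negb_and xy orbT.
have d31 : (y, x) != (x, x) by rewrite xpair_eqE negb_and xy.
have d32 : (y, x) != (x, y) by rewrite xpair_eqE negb_and xy.
have nb p : p \in [:: (x, x); (x, y); (y, x)] -> ~~ (inbox i i.+1 p || inbox i.+1 i p).
  rewrite !inE => /or3P[] /eqP -> ; rewrite /inbox /=; apply/negP; case/orP => /andP[? ?]; lia.
have a1 e : adm e i i = e (x, x).
  by rewrite -[i]/(nat_of_ord x) adm_ord /admissible /= addn1 leqnSn !andbT.
have a2 e : adm e i i.+1 = e (x, y).
  rewrite -[i.+1]/(nat_of_ord y) -[i]/(nat_of_ord x) adm_ord /admissible /x /y /=.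
  have t1 : (i <= i.+1 + 1)%N by lia.
  have t2 : (i.+1 <= i + 1)%N by lia.
  by rewrite t1 t2 !andbT.
have a3 e : adm e i.+1 i = e (y, x).
  rewrite -[i.+1]/(nat_of_ord y) -[i]/(nat_of_ord x) adm_ord /admissible /x /y /=.
  have t1 : (i <= i.+1 + 1)%N by lia.
  have t2 : (i.+1 <= i + 1)%N by lia.
  by rewrite t1 t2 !andbT.
have sst e : st e i.+1 = Tf (st e i) (e (x, x)) (e (x, y)) (e (y, x)).
  by rewrite /st step_sa step_sb a1 a2 a3.
rewrite /Ps.
under eq_bigr do rewrite sst.
rewrite (@avg3 _ (fun e => st e i) _ _ _ (fun s b1 b2 b3 => (Tf s b1 b2 b3 == t)%:R) d21 d31 d32).
- rewrite (sum_st (fun e => st e i) (fun s => K s t)).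
  by apply: eq_bigr.
- by move=> e b; case: (inv_upd e b (nb (x, x) _)); rewrite ?inE ?eqxx.
- by move=> e b; case: (inv_upd e b (nb (x, y) _)); rewrite ?inE ?eqxx ?orbT.
- by move=> e b; case: (inv_upd e b (nb (y, x) _)); rewrite ?inE ?eqxx ?orbT.
Qed.

Lemma K_vals :
  [/\ K (false, false) (false, false) = 5/8, K (false, true) (false, false) = 1/2,
      K (true, false) (false, false) = 1/2, K (true, true) (false, false) = 1/4 &
   [/\ K (false, false) (true, true) = 1/8, K (false, true) (true, true) = 0,
      K (true, false) (true, true) = 0 & K (true, true) (true, true) = 1/4]].
Proof.
rewrite /K !big_bool /=.
split; [lra|lra|lra|lra|split; lra].
Qed.

End Prob.

Lemma sum4 (F : bool * bool -> rat) :
  \sum_s F s = F (true, true) + F (true, false) + (F (false, true) + F (false, false)).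
Proof.
rewrite (eq_bigr (fun s => F (s.1, s.2))); last by case.
by rewrite -(pair_bigA _ (fun a b => F (a, b))) /= !big_bool.
Qed.

Fixpoint uw (k : nat) : rat * rat :=
  match k with
  | 0 => (1, 0)
  | k'.+1 => ((uw k').1 / 8 - (uw k').2 / 4 + 1 / 2, (uw k').1 / 8 + (uw k').2 / 4)
  end.

Section Prob2.
Variable n : nat.

Lemma Z_eq : Z n = (2 ^ (n * n))%:R.
Proof. by rewrite /Z sumr_const card_ffun card_prod !card_ord card_bool. Qed.

Lemma Z_gt0 : 0 < Z n.
Proof. by rewrite Z_eq ltr0n expn_gt0. Qed.

Lemma Ps_sum i : \sum_s Ps n i s = Z n.
Proof.
rewrite /Z (sum_st (fun e => st e i) (fun _ => 1)).
by apply: eq_bigr => s _; rewrite mulr1.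
Qed.

Lemma st0 (e : config n) : st e 0 = (false, false).
Proof. by rewrite /st /sa /sb /aa /bb /cc !L0l L0r. Qed.

Lemma Ps_uw k : (k < n)%N -> Ps n k (false, false) = Z n * (uw k).1 /\ Ps n k (true, true) = Z n * (uw k).2.
Proof.
elim: k => [_|k IH hk].
  rewrite /Ps; under eq_bigr do rewrite st0.
  by rewrite /Z /= !mulr1 !mulr0; split => //; rewrite big1 // => e _; rewrite st0.
have [h1 h2] := IH (ltnW hk).
have hs := Ps_sum k.
rewrite sum4 in hs.
have [k1 k2 k3 k4 [k5 k6 k7 k8]] := K_vals.
rewrite !Ps_step // !sum4 k1 k2 k3 k4 k5 k6 k7 k8 h1 h2 /=.
rewrite h1 h2 in hs.
split; lra.
Qed.

Lemma Cs_uw k : (k <= n)%N -> Cs n k = Z n * (k%:R - 1 / 2 * \sum_(j < k) (uw j).1).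
Proof.
elim: k => [_|k IH hk].
  by rewrite /Cs big1 ?big_ord0 ?mulr0 ?subr0 // => e _; rewrite /cc L0l.
rewrite Cs_step // IH ?(ltnW hk) // big_ord_recr /=.
have [h1 _] := Ps_uw hk.
rewrite h1 -natr1; lra.
Qed.

Lemma ELB_uw : ELB n 1 = n%:R - 1 / 2 * \sum_(j < n) (uw j).1.
Proof.
have -> : ELB n 1 = Cs n n / Z n.
  by rewrite /ELB Z_eq /Cs; congr (_ / _); apply: eq_bigr => e _; rewrite Rnr_L.
rewrite Cs_uw // mulrC mulrA mulVf ?mul1r //.
by apply: lt0r_neq0; apply: Z_gt0.
Qed.

End Prob2.

Definition errk (k : nat) : rat := (6 * ((uw k).1 - 6/11) - 2 * ((uw k).2 - 1/11)) / 11.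

Lemma closed k : k%:R - 1/2 * \sum_(j < k) (uw j).1 = 8/11 * k%:R - 32/121 + errk k.
Proof.
rewrite /errk; elim: k => [|k IH]; first by rewrite big_ord0 /=; lra.
rewrite big_ord_recr /= -natr1.
move: IH; set u := (uw k).1; set w := (uw k).2; set s := \sum_(j < k) _ => IH.
lra.
Qed.

Lemma r_S k : (2 : rat) ^+ (2 * k.+1) = 4 * 2 ^+ (2 * k).
Proof. by rewrite mulnS exprD. Qed.

Lemma Qk k : let U := (uw k).1 - 6/11 in let W := (uw k).2 - 1/11 in
  (U ^+ 2 + U * W + 2 * W ^+ 2) * (2 ^+ (2 * k)) ^+ 2 = 2 / 11.
Proof.
elim: k => [|k IH] /=; first by rewrite mul1r; lra.
move: IH => /=; rewrite r_S.
set u := (uw k).1; set w := (uw k).2; set r := (2 : rat) ^+ (2 * k) => IH.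
by rewrite -IH; field.
Qed.

Lemma err_bound k : `|errk k| <= 1 / 2 ^+ (2 * k).
Proof.
have := Qk k => /=.
rewrite /errk; set u := (uw k).1; set w := (uw k).2; set r := (2 : rat) ^+ (2 * k) => h.
have rp : 0 < r by rewrite /r exprn_gt0.
set a := (u - 6/11) * r; set b := (w - 1/11) * r.
have hab : a ^+ 2 + a * b + 2 * b ^+ 2 = 2 / 11 by rewrite -h /a /b; ring.
have hx : ((6 * a - 2 * b) / 11) ^+ 2 <= 1 by nra.
have hy : `|(6 * a - 2 * b) / 11| <= 1.
  rewrite ler_norml; apply/andP; split; nra.
have -> : (6 * (u - 6 / 11) - 2 * (w - 1 / 11)) / 11 = ((6 * a - 2 * b) / 11) / r.
  by rewrite /a /b; field; apply: lt0r_neq0.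
rewrite normrM normfV (gtr0_norm rp) ler_pdivrMr // mul1r mulVf //.
by apply: lt0r_neq0.
Qed.

Theorem mainTheorem3 :
  (exists (C : rat) (N : nat), forall n : nat, (N <= n)%N ->
     `| ELB n 1 - (8 / 11 * n%:R - 32 / 121) | <= C * n%:R / (2 ^+ (2 * n))) /\
  (forall eps : rat, 0 < eps -> exists N : nat, forall n : nat, (N <= n)%N ->
     `| ELB n 1 / n%:R - 8 / 11 | < eps).
Proof.
have E n : ELB n 1 = 8 / 11 * n%:R - 32 / 121 + errk n by rewrite ELB_uw closed.
split.
  exists 1, 1%N => n hn.
  rewrite E addrC addKr.
  apply: le_trans (err_bound n) _.
  have rp : 0 < (2 : rat) ^+ (2 * n) by rewrite exprn_gt0.
  have hn' : 1 <= n%:R :> rat by rewrite ler1n.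
  have xp : 0 <= ((2 : rat) ^+ (2 * n))^-1 by rewrite invr_ge0 ltW.
  rewrite !mul1r; move: xp; set x := ((2 : rat) ^+ (2 * n))^-1 => xp; nra.
move=> eps heps.
have hb := @archi_boundP _ (2 / eps) (ltW (divr_gt0 (ltr0Sn _ 1) heps)).
exists (Num.Def.archi_bound (2 / eps)).+1 => n hn.
have hm : (Num.Def.archi_bound (2 / eps)).+1%:R <= n%:R :> rat by rewrite ler_nat.
have hm0 : 0 < n%:R :> rat by rewrite ltr0n; apply: leq_trans hn.
have hnb : 2 / eps < n%:R by rewrite -natr1 in hm; lra.
have h2 : 2 < eps * n%:R by rewrite ltr_pdivrMr // in hnb; lra.
have hr : 1 <= (2 : rat) ^+ (2 * n) by rewrite exprn_ege1.
have he : `|errk n| <= 1.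
  apply: le_trans (err_bound n) _.
  by rewrite ler_pdivrMr ?mul1r // (lt_le_trans ltr01 hr).
move: he; rewrite ler_norml => /andP[he1 he2].
have -> : ELB n 1 / n%:R - 8 / 11 = (- (32 / 121) + errk n) / n%:R.
  by rewrite E; field; apply: lt0r_neq0.
rewrite ltr_norml ltr_pdivrMr // ltr_pdivlMr //; apply/andP; split; nra.
Qed.
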